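(* Let $\mu\in\mathbb{C}$, $r(z)\in\mathbb{C}(z)^\times$ and let $(W,\rho_r)=(\mathbb{C}(z),\rho^{(\mu)}_r)$. There exists a polynomial Casimir representation of rank $1$, $(V,\rho')$, such that $(W,\rho_r)\cong F_{\mathrm{rat}}(V,\rho')$ if and only if there exist $\gamma\in\mathbb{C}^\times$, $\alpha_1,\dots,\alpha_n\in\mathbb{C}$, $a_1,\dots,a_n\in\mathbb{Z}$ such that, writing $\pi_\mu(z)=\alpha_\mu(z)\beta_\mu(z)$ as a product of monic polynomials of degree $1$, $r(z)$ is of one of the four types: I) $r(z)=\gamma\,\pi_\mu(z+1)\prod_{i=1}^n\frac{z+a_i-\alpha_i}{z-\alpha_i}$; II) $r(z)=\gamma\,\alpha_\mu(z+1)\prod_{i=1}^n\frac{z+a_i-\alpha_i}{z-\alpha_i}$; III) $r(z)=\gamma\,\beta_\mu(z+1)\prod_{i=1}^n\frac{z+a_i-\alpha_i}{z-\alpha_i}$; IV) $r(z)=\gamma\prod_{i=1}^n\frac{z+a_i-\alpha_i}{z-\alpha_i}$.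
   Context: $\mathfrak{sl}(2)$ has basis $L_{-1}=f$, $L_0=-\tfrac12 h$, $L_1=-e$ for a Chevalley basis $e,f,h$. Every $\mathfrak{sl}(2)$-module $(V,\rho)$ is a $\mathbb{C}[z]$-module via $z\cdot v=\rho(L_0)v$; Casimir operator $C_\rho=\rho(L_0)(\rho(L_0)-1)-\rho(L_{-1})\rho(L_1)$, and $V$ is Casimir if $C_\rho$ is a scalar. A polynomial Casimir representation of rank $1$ is a Casimir $\mathfrak{sl}(2)$-module which, as a $\mathbb{C}[z]$-module, is free of rank $1$. $\nabla g(z)=g(z+1)$ on $\mathbb{C}(z)$; $\pi_\mu(z)=z(z-1)-\mu$. For $r\in\mathbb{C}(z)^\times$, $\rho^{(\mu)}_r$ is the representation on $\mathbb{C}(z)$ with $\rho^{(\mu)}_r(L_{-1})=\frac{\pi_\mu(z)}{r(z-1)}\circ\nabla^{-1}$, $\rho^{(\mu)}_r(L_0)=z$, $\rho^{(\mu)}_r(L_1)=r(z)\circ\nabla$. The rationalization of a torsion free finite rank $(V,\rho)$ is $F_{\mathrm{rat}}(V,\rho)=(S^{-1}V,\rho_{\mathrm{rat}})$, $S=\mathbb{C}[z]\setminus\{0\}$, with $\rho_{\mathrm{rat}}(L_{\pm1})(v/p(z))=\rho(L_{\pm1})(v)/p(z\pm1)$, $\rho_{\mathrm{rat}}(L_0)(v/p)=zv/p$. *)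

(* Defs.v *)
(* C(z) is {fraction {poly C}}; the complex numbers are R[i]
   for R : realType (mathcomp-real-closed's complex numbers over the reals). *)
From HB Require Import structures.
From mathcomp Require Import all_boot all_order all_algebra.
From mathcomp Require Import generic_quotient fraction.
From mathcomp Require Import boolp reals complex.
From Stdlib Require Import Relation_Operators.

Set Implicit Arguments.
Unset Strict Implicit.
Unset Printing Implicit Defensive.

Import Order.TTheory GRing.Theory Num.Theory.
Local Open Scope ring_scope.
Local Open Scope quotient_scope.

Notation "x %:F" := (@FracField.tofrac _ x).

Section Sl2Defs.
Variable C : fieldType.

Definition pimu (mu : C) : {poly C} := 'X * ('X - 1) - mu%:P.

(** shift g(z) |-> g(z + c) on C(z) (c = 1 : nabla, c = -1 : nabla^-1) *)
Definition fshift (c : C) (f : {fraction {poly C}}) : {fraction {poly C}} :=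
  let x := repr f in
  (\n_x \Po ('X + c%:P))%:F / (\d_x \Po ('X + c%:P))%:F.

(** The representation rho^(mu)_r on W = C(z); C acts on W by multiplication
    by constants. *)
Definition Wscale (c : C) (f : {fraction {poly C}}) := (c%:P)%:F * f.
Definition Wm (mu : C) (r f : {fraction {poly C}}) :=
  (pimu mu)%:F / fshift (-1) r * fshift (-1) f.
Definition W0 (f : {fraction {poly C}}) := ('X : {poly C})%:F * f.
Definition Wp (r f : {fraction {poly C}}) := r * fshift 1 f.

Variable V : lmodType C.

(** C[z]-module structure on V : p(z) . v = p(rho(L_0)) v *)
Definition zact (L0 : V -> V) (p : {poly C}) (v : V) : V :=
  \sum_(i < size p) p`_i *: iter i L0 v.

(** (V, rho) is an sl(2)-module: rho(L_m) are linear maps satisfying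
    [L_m, L_n] = (m - n) L_(m+n). *)
Definition is_sl2_rep (Lm L0 Lp : {linear V -> V}) : Prop :=
  [/\ forall v, Lp (Lm v) - Lm (Lp v) = L0 v *+ 2,
      forall v, L0 (Lp v) - Lp (L0 v) = - Lp v &
      forall v, L0 (Lm v) - Lm (L0 v) = Lm v].

Definition casimir_op (Lm L0 Lp : V -> V) (v : V) : V :=
  L0 (L0 v - v) - Lm (Lp v).

Definition is_casimir (Lm L0 Lp : V -> V) : Prop :=
  exists c : C, forall v, casimir_op Lm L0 Lp v = c *: v.

Definition free_rank1 (L0 : V -> V) : Prop :=
  exists v0 : V, bijective (fun p : {poly C} => zact L0 p v0).

Definition poly_casimir_rank1 (Lm L0 Lp : {linear V -> V}) : Prop :=
  [/\ is_sl2_rep Lm L0 Lp, is_casimir Lm L0 Lp & free_rank1 L0].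

(** Localization S^-1 V, S = C[z] \ {0}: pairs (v, p) with p != 0 modulo
    (v,p) ~ (w,q) iff s (q v - p w) = 0 for some s != 0
    (closed under equivalence, which changes nothing since this is already
    an equivalence relation). *)
Definition npoly := {p : {poly C} | p != 0}.
Definition npoly1 : npoly := exist _ 1 (oner_neq0 _).
Definition lpair := (V * npoly)%type.

Section Loc.
Variable L0 : V -> V.

Definition lrel0 (x y : lpair) : Prop :=
  exists s : {poly C}, s != 0 /\
    zact L0 s (zact L0 (val y.2) x.1 - zact L0 (val x.2) y.1) = 0.

Definition lrel (x y : lpair) : bool :=
  `[< clos_refl_sym_trans lpair lrel0 x y >].

Lemma lrel_refl : reflexive lrel.
Proof. by move=> x; apply/asboolP; apply: rst_refl. Qed.

Lemma lrel_sym : symmetric lrel.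
Proof.
by move=> x y; apply/asboolP/asboolP => H; apply: rst_sym.
Qed.

Lemma lrel_trans : transitive lrel.
Proof.
move=> y x z /asboolP Hxy /asboolP Hyz; apply/asboolP.
exact: rst_trans Hxy Hyz.
Qed.

Canonical lrel_equiv := EquivRel lrel lrel_refl lrel_sym lrel_trans.

Definition loc := {eq_quot lrel}.

End Loc.

Section Rat.
Variables (Lm L0 Lp : V -> V).
Local Notation Q := (loc L0).

Definition mkpair (v : V) (p : {poly C}) : lpair := (v, insubd npoly1 p).

Definition loc_add (x y : Q) : Q :=
  let a := repr x in let b := repr y in
  \pi_Q (mkpair (zact L0 (val b.2) a.1 + zact L0 (val a.2) b.1)
                (val a.2 * val b.2)).
Definition loc_scale (c : C) (x : Q) : Q :=
  let a := repr x in \pi_Q (c *: a.1, a.2).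

Definition locm (x : Q) : Q :=
  let a := repr x in \pi_Q (mkpair (Lm a.1) (val a.2 \Po ('X - 1))).
Definition loc0 (x : Q) : Q :=
  let a := repr x in \pi_Q (L0 a.1, a.2).
Definition locp (x : Q) : Q :=
  let a := repr x in \pi_Q (mkpair (Lp a.1) (val a.2 \Po ('X + 1))).

Definition iso_to_rat (mu : C) (r : {fraction {poly C}}) : Prop :=
  exists phi : {fraction {poly C}} -> Q,
    bijective phi /\
    [/\ forall f g, phi (f + g) = loc_add (phi f) (phi g),
        forall c f, phi (Wscale c f) = loc_scale c (phi f),
        forall f, phi (Wm mu r f) = locm (phi f),
        forall f, phi (W0 f) = loc0 (phi f) &
        forall f, phi (Wp r f) = locp (phi f)].

End Rat.
End Sl2Defs.

(* Main.v *)
Require Import Defs.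
From HB Require Import structures.
From mathcomp Require Import all_boot all_order all_algebra.
From mathcomp Require Import generic_quotient fraction.
From mathcomp Require Import boolp reals complex.
From Stdlib Require Import Relation_Operators.
From mathcomp Require Import zify ring.
Import Order.TTheory GRing.Theory Num.Theory.
Local Open Scope ring_scope.
Local Open Scope quotient_scope.
Set Implicit Arguments. Unset Strict Implicit. Unset Printing Implicit Defensive.

Section FracLemmas.
Variable R : idomainType.
Lemma pi_ratio (x : {ratio R}) : \pi_({fraction R}) x = (\n_x)%:F / (\d_x)%:F.
Proof.
have d0 : (\d_x)%:F != 0 :> {fraction R}.
  rewrite tofrac_eq0. exact: denom_ratioP.
suff H : \pi_({fraction R}) x * (\d_x)%:F = (\n_x)%:F by rewrite -H mulfK.
have -> : (\d_x)%:F = \pi_({fraction R}) (Ratio (\d_x) 1) by rewrite /FracField.tofrac -lock.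
have -> : (\n_x)%:F = \pi_({fraction R}) (Ratio (\n_x) 1) by rewrite /FracField.tofrac -lock.
rewrite -[_ * _]FracField.pi_mul.
apply/eqmodP; rewrite /= FracField.equivfE /FracField.mulf !numden_Ratio ?oner_neq0 ?mulf_neq0 ?oner_neq0 //.
  by rewrite !mulr1 mulrC.
all: exact: denom_ratioP.
Qed.

Lemma frac_numden (f : {fraction R}) :
  f = (\n_(repr f))%:F / (\d_(repr f))%:F.
Proof. by rewrite -pi_ratio reprK. Qed.

Lemma frac_den_neq0 (f : {fraction R}) : \d_(repr f) != 0.
Proof. exact: denom_ratioP. Qed.

Lemma frac_eq (a b c d : R) : b != 0 -> d != 0 ->
  (a%:F / b%:F = c%:F / d%:F :> {fraction R}) <-> a * d = c * b.
Proof.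
move=> b0 d0.
have b0' : b%:F != 0 :> {fraction R} by rewrite tofrac_eq0.
have d0' : d%:F != 0 :> {fraction R} by rewrite tofrac_eq0.
split => H.
  apply/eqP; rewrite -tofrac_eq !tofracM; apply/eqP.
  by rewrite -[a%:F](divfK b0') H mulrAC divfK // mulrC.
apply/eqP; rewrite eqr_div // -!tofracM H //.
Qed.
End FracLemmas.

Section Shift.
Variable K : fieldType.
Local Notation F := {fraction {poly K}}.
Definition sh (c : K) (p : {poly K}) := p \Po ('X + c%:P).

Lemma sh_neq0 c p : p != 0 -> sh c p != 0.
Proof.
move=> p0; rewrite /sh -size_poly_eq0 size_comp_poly2 ?size_poly_eq0 //.
by rewrite size_XaddC.
Qed.
Lemma shM c p q : sh c (p * q) = sh c p * sh c q.
Proof. exact: comp_polyM. Qed.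
Lemma shD c p q : sh c (p + q) = sh c p + sh c q.
Proof. exact: comp_polyD. Qed.
Lemma shC c k : sh c k%:P = k%:P.
Proof. exact: comp_polyC. Qed.
Lemma shX c : sh c 'X = 'X + c%:P.
Proof. exact: comp_polyX. Qed.
Lemma shK c p : sh (- c) (sh c p) = p.
Proof.
rewrite /sh -comp_polyA comp_polyD comp_polyX comp_polyC.
by rewrite -addrA -polyCD addNr addr0 comp_polyXr.
Qed.

Lemma fshift_frac c p q : q != 0 ->
  fshift c (p%:F / q%:F) = (sh c p)%:F / (sh c q)%:F.
Proof.
move=> q0; rewrite /fshift.
set x := repr _.
have dx := frac_den_neq0 (p%:F / q%:F).
have E := frac_numden (p%:F / q%:F).
rewrite -/x in E dx.
move/(frac_eq _ _ dx q0): (esym E) => E2.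
apply/frac_eq; rewrite ?sh_neq0 //.
by rewrite /sh -!comp_polyM E2.
Qed.

Lemma fshift_poly c p : fshift c p%:F = (sh c p)%:F.
Proof.
have := fshift_frac c p (oner_neq0 _).
by rewrite tofrac1 !divr1 /sh comp_polyC => ->; rewrite tofrac1 divr1.
Qed.

Lemma frac_form (f : F) : exists p q, q != 0 /\ f = p%:F / q%:F.
Proof. by exists (\n_(repr f)), (\d_(repr f)); split; [exact: frac_den_neq0 | exact: frac_numden]. Qed.

Lemma fshiftM (c : K) (f g : F) : fshift c (f * g) = fshift c f * fshift c g.
Proof.
have [p [q [q0 ->]]] := frac_form f.
have [p' [q' [q0' ->]]] := frac_form g.
rewrite mulf_div -!tofracM !fshift_frac ?mulf_neq0 // !shM.
by rewrite mulf_div -!tofracM.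
Qed.

Lemma fshiftV (c : K) (f : F) : fshift c (f^-1) = (fshift c f)^-1.
Proof.
have [p [q [q0 ->]]] := frac_form f.
have [->|p0] := eqVneq p 0.
  by rewrite tofrac0 mul0r invr0 -tofrac0 -[0%:F]divr1 -tofrac1 fshift_frac ?oner_neq0 // /sh comp_poly0 tofrac0 mul0r invr0.
rewrite invf_div !fshift_frac // invf_div //.
Qed.

Lemma fshiftK (c : K) (f : F) : fshift (- c) (fshift c f) = f.
Proof.
have [p [q [q0 ->]]] := frac_form f.
by rewrite !fshift_frac ?sh_neq0 // !shK.
Qed.

Lemma fshift1 (c : K) : fshift c (1 : F) = 1.
Proof. by rewrite -tofrac1 fshift_poly /sh comp_polyC. Qed.

Lemma fshift0 (c : K) : fshift c (0 : F) = 0.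
Proof. by rewrite -tofrac0 fshift_poly /sh comp_poly0. Qed.

Lemma fshift_eq0 (c : K) (f : F) : (fshift c f == 0) = (f == 0).
Proof.
apply/eqP/eqP => [H|->]; last exact: fshift0.
by rewrite -(fshiftK c f) H fshift0.
Qed.
End Shift.

Section Zact.
Variables (K : fieldType) (V : lmodType K) (L0 : {linear V -> V}).
Local Notation Z := (zact L0).
Implicit Types (p q : {poly K}) (v w : V) (c : K).

Lemma iterD i (v w : V) : iter i L0 (v + w) = iter i L0 v + iter i L0 w.
Proof. by elim: i => //= i ->; rewrite linearD. Qed.
Lemma iterZ i c (v : V) : iter i L0 (c *: v) = c *: iter i L0 v.
Proof. by elim: i => //= i ->; rewrite linearZ. Qed.
Lemma iterN i (v : V) : iter i L0 (- v) = - iter i L0 v.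
Proof. by rewrite -[- v]scaleN1r iterZ scaleN1r. Qed.

Lemma zact_ext N p v : (size p <= N)%N ->
  Z p v = \sum_(i < N) p`_i *: iter i L0 v.
Proof.
move=> H; rewrite /zact (big_ord_widen N (fun i => p`_i *: iter i L0 v) H).
rewrite big_mkcond; apply: eq_bigr => i _.
case: ifP => // /negbT; rewrite -leqNgt => Hi.
by rewrite nth_default // scale0r.
Qed.

Lemma zact0 v : Z 0 v = 0.
Proof. by rewrite /zact size_poly0 big_ord0. Qed.

Lemma zactD p q v : Z (p + q) v = Z p v + Z q v.
Proof.
set N := maxn (size p) (size q).
rewrite !(zact_ext (N := N)) ?leq_maxl ?leq_maxr ?size_add //.
by rewrite -big_split; apply: eq_bigr => i _; rewrite coefD scalerDl.
Qed.

Lemma zactZ c p v : Z (c *: p) v = c *: Z p v.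
Proof.
rewrite !(zact_ext (N := size p)) ?size_scale_leq //.
by rewrite scaler_sumr; apply: eq_bigr => i _; rewrite coefZ scalerA.
Qed.

Lemma zactN p v : Z (- p) v = - Z p v.
Proof. by rewrite -[- p]scaleN1r zactZ scaleN1r. Qed.

Lemma zactB p q v : Z (p - q) v = Z p v - Z q v.
Proof. by rewrite zactD zactN. Qed.

Lemma zact_vD p v w : Z p (v + w) = Z p v + Z p w.
Proof.
rewrite /zact -big_split; apply: eq_bigr => i _.
by rewrite iterD scalerDr.
Qed.

Lemma zact_vZ p c v : Z p (c *: v) = c *: Z p v.
Proof.
rewrite /zact scaler_sumr; apply: eq_bigr => i _.
by rewrite iterZ !scalerA mulrC.
Qed.

Lemma zact_vN p v : Z p (- v) = - Z p v.
Proof. by rewrite -[- v]scaleN1r zact_vZ scaleN1r. Qed.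

Lemma zact_vB p v w : Z p (v - w) = Z p v - Z p w.
Proof. by rewrite zact_vD zact_vN. Qed.

Lemma zact_v0 p : Z p 0 = 0.
Proof. by have := zact_vB p 0 0; rewrite subrr => ->; rewrite subrr. Qed.

Lemma zactC c v : Z c%:P v = c *: v.
Proof.
rewrite (zact_ext (N := 1)) ?size_polyC ?leq_b1 //.
by rewrite big_ord1 coefC.
Qed.

Lemma zact1 v : Z 1 v = v.
Proof. by rewrite -polyC1 zactC scale1r. Qed.

Lemma zact_mulX p v : Z (p * 'X) v = L0 (Z p v).
Proof.
rewrite (zact_ext (N := (size p).+1)); last first.
  by rewrite (leq_trans (size_mul_leq _ _)) // size_polyX addn2.
rewrite big_ord_recl coefMX /= scale0r add0r /zact linear_sum.
apply: eq_bigr => i _; rewrite coefMX /= linearZ //.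
Qed.

Lemma zact_mulX' p v : Z (p * 'X) v = Z p (L0 v).
Proof.
rewrite (zact_ext (N := (size p).+1)); last first.
  by rewrite (leq_trans (size_mul_leq _ _)) // size_polyX addn2.
rewrite big_ord_recl coefMX /= scale0r add0r /zact.
apply: eq_bigr => i _; rewrite coefMX /=.
by rewrite add0n -iterS iterSr.
Qed.

Lemma zactM p q v : Z (p * q) v = Z p (Z q v).
Proof.
elim/poly_ind: p q v => [|p c IH] q v; first by rewrite mul0r !zact0.
rewrite mulrDl -mulrA (mulrC 'X q) zactD IH zact_mulX mul_polyC zactZ.
by rewrite zactD zactC zact_mulX'.
Qed.

Lemma zact_intertwine (T : {linear V -> V}) (c : K) :
  (forall v, T (L0 v) = L0 (T v) + c *: T v) ->
  forall p v, T (Z p v) = Z (sh c p) (T v).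
Proof.
move=> HT p; elim/poly_ind: p => [|p c0 IH] v.
  by rewrite zact0 /sh comp_poly0 zact0 linear0.
rewrite zactD zactC zact_mulX' linearD IH HT linearZ.
rewrite shD shM shC shX zactD zactC mulrDr zactD zact_mulX'.
by rewrite zact_vD zact_vZ mulrC mul_polyC zactZ.
Qed.
End Zact.

Section Theta.
Variables (K : fieldType) (V : lmodType K) (L0 : {linear V -> V}) (v0 : V)
  (Einv : V -> {poly K}).
Local Notation E := (fun p => zact L0 p v0).
Hypotheses (EK : cancel E Einv) (EinvK : cancel Einv E).
Local Notation F := {fraction {poly K}}.

Lemma EinvZact q w : Einv (zact L0 q w) = q * Einv w.
Proof. by rewrite -{1}(EinvK w) -zactM EK. Qed.
Lemma EinvD v w : Einv (v + w) = Einv v + Einv w.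
Proof. by rewrite -{1}(EinvK v) -{1}(EinvK w) -zactD EK. Qed.
Lemma EinvZ c v : Einv (c *: v) = c *: Einv v.
Proof. by rewrite -{1}(EinvK v) -zactZ EK. Qed.
Lemma EinvL0 v : Einv (L0 v) = Einv v * 'X.
Proof. by rewrite -{1}(EinvK v) -zact_mulX EK. Qed.
Lemma EinvB v w : Einv (v - w) = Einv v - Einv w.
Proof. by rewrite -{1}(EinvK v) -{1}(EinvK w) -zactB EK. Qed.
Lemma Einv0 : Einv 0 = 0.
Proof. by rewrite -(zact0 L0 v0) EK. Qed.

Definition Lam (x : lpair V) : F := (Einv x.1)%:F / (val x.2)%:F.

Lemma npoly_neq0 (q : Defs.npoly K) : val q != 0.
Proof. exact: (valP q). Qed.

Lemma lrel0_Lam x y : lrel0 L0 x y -> Lam x = Lam y.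
Proof.
case=> s [s0 H].
have : Einv (zact L0 s (zact L0 (val y.2) x.1 - zact L0 (val x.2) y.1)) = 0
  by rewrite H Einv0.
rewrite EinvZact EinvB !EinvZact.
move/eqP; rewrite mulf_eq0 (negbTE s0) /= subr_eq0 => /eqP Hxy.
rewrite /Lam; apply/frac_eq; rewrite ?npoly_neq0 //.
by rewrite mulrC Hxy mulrC.
Qed.

Lemma lrel_Lam x y : lrel L0 x y -> Lam x = Lam y.
Proof.
move/asboolP; elim => [u w /lrel0_Lam|u|u w _ ->|u w z _ -> _ ->] //.
Qed.

Lemma Lam_lrel x y : Lam x = Lam y -> lrel L0 x y.
Proof.
move=> H; apply/asboolP; apply: rst_step; exists 1; split; first exact: oner_neq0.
rewrite zact1.
move: H; rewrite /Lam => /frac_eq H.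
have {}H := H (npoly_neq0 _) (npoly_neq0 _).
apply: (can_inj EinvK); rewrite Einv0 EinvB !EinvZact.
by rewrite mulrC H mulrC subrr.
Qed.

Definition Theta (x : loc L0) : F := Lam (repr x).

Lemma Theta_pi p : Theta (\pi_(loc L0) p) = Lam p.
Proof. apply: lrel_Lam; apply/eqmodP; by rewrite reprK. Qed.

Lemma Theta_inj : injective Theta.
Proof.
move=> x y H; rewrite -[x]reprK -[y]reprK; apply/eqmodP; exact: Lam_lrel.
Qed.

Lemma Lam_mkpair v q : q != 0 -> Lam (mkpair v q) = (Einv v)%:F / q%:F.
Proof. by move=> q0; rewrite /Lam /mkpair /= val_insubd q0. Qed.

Definition Thinv (f : F) : loc L0 :=
  \pi_(loc L0) (mkpair (E (\n_(repr f))) (\d_(repr f))).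

Lemma ThinvK : cancel Thinv Theta.
Proof.
move=> f; rewrite /Thinv Theta_pi Lam_mkpair ?frac_den_neq0 // EK.
by rewrite -frac_numden.
Qed.

Lemma ThetaK : cancel Theta Thinv.
Proof. by move=> x; apply: Theta_inj; rewrite ThinvK. Qed.

Lemma Theta_add x y : Theta (loc_add x y) = Theta x + Theta y.
Proof.
have h1 := npoly_neq0 (repr x).2; have h2 := npoly_neq0 (repr y).2.
rewrite /loc_add Theta_pi.
rewrite Lam_mkpair; last by rewrite mulf_neq0.
rewrite EinvD !EinvZact /Theta /Lam.
set q1 := \val (repr x).2; set q2 := \val (repr y).2.
set p1 := Einv (repr x).1; set p2 := Einv (repr y).1.
rewrite addf_div ?tofrac_eq0 // -!tofracM -tofracD.
by rewrite [q2 * p1]mulrC [q1 * p2]mulrC.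
Qed.

Lemma Theta_scale c x : Theta (loc_scale c x) = (c%:P)%:F * Theta x.
Proof.
by rewrite /loc_scale Theta_pi /Lam /= EinvZ -mul_polyC tofracM /Theta /Lam mulrA.
Qed.

Lemma Theta_0 x : Theta (loc0 x) = ('X : {poly K})%:F * Theta x.
Proof.
rewrite /loc0 Theta_pi /Lam /= EinvL0 tofracM /Theta /Lam mulrA; congr (_ / _); exact: mulrC.
Qed.

Lemma Theta_shift (T : {linear V -> V}) (c : K) (a : {poly K}) :
  (forall v, T (L0 v) = L0 (T v) + c *: T v) -> T v0 = E a ->
  forall x, Theta (\pi_(loc L0) (mkpair (T (repr x).1) (val (repr x).2 \Po ('X + c%:P))))
     = a%:F * fshift c (Theta x).
Proof.
move=> HT Ha x.
have q0 := npoly_neq0 (repr x).2.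
rewrite Theta_pi Lam_mkpair; last by have := sh_neq0 c q0.
rewrite /Theta /Lam fshift_frac //.
rewrite -{1}(EinvK (repr x).1) (zact_intertwine HT) Ha -zactM EK.
by rewrite tofracM mulrA [_ * a%:F]mulrC.
Qed.
End Theta.

Section Forward.
Variables (K : fieldType) (mu : K) (r : {fraction {poly K}}) (hr : r != 0)
  (V : lmodType K) (Lm L0 Lp : {linear V -> V}).
Local Notation F := {fraction {poly K}}.

Lemma forward_core : poly_casimir_rank1 Lm L0 Lp -> iso_to_rat Lm L0 Lp mu r ->
  exists (a b : {poly K}) (k : F),
    [/\ k != 0, r * k = a%:F * fshift 1 k & pimu mu = sh (-1) a * b].
Proof.
case=> [[_ HLp HLm] _ [v0 [Einv EK EinvK]]].
case=> phi [[phiinv phiK phiinvK] [Hadd Hsc Hm H0 Hp]].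
set a := Einv (Lp v0); set b := Einv (Lm v0).
have HTp : forall v, Lp (L0 v) = L0 (Lp v) + 1 *: Lp v.
  by move=> v; rewrite scale1r -[Lp (L0 v)](subKr (L0 (Lp v))) HLp opprK.
have HTm : forall v, Lm (L0 v) = L0 (Lm v) + (-1) *: Lm v.
  by move=> v; rewrite scaleN1r -[Lm (L0 v)](subKr (L0 (Lm v))) HLm.
pose Th := @Theta _ _ L0 Einv.
pose chi f := Th (phi f).
have chi_add f g : chi (f + g) = chi f + chi g by rewrite /chi /Th Hadd (Theta_add EK EinvK).
have chi_sc c f : chi ((c%:P)%:F * f) = (c%:P)%:F * chi f.
  by rewrite /chi /Th -[_ * f]/(Wscale c f) Hsc (Theta_scale EK EinvK).
have chi_X f : chi (('X : {poly K})%:F * f) = ('X : {poly K})%:F * chi f.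
  by rewrite /chi /Th -[_ * f]/(W0 f) H0 (Theta_0 EK EinvK).
have chi_p f : chi (r * fshift 1 f) = a%:F * fshift 1 (chi f).
  rewrite /chi /Th -[_ * _]/(Wp r f) Hp /locp -polyC1.
  by apply: (Theta_shift EK EinvK) => //; rewrite EinvK.
have chi_m f : chi (Wm mu r f) = b%:F * fshift (-1) (chi f).
  rewrite /chi /Th Hm /locm.
  have -> : ('X - 1 : {poly K}) = 'X + (-1)%:P by rewrite polyCN polyC1.
  by apply: (Theta_shift EK EinvK) => //; rewrite EinvK.
have chi0 : chi 0 = 0.
  have H := chi_add 0 0; rewrite addr0 in H.
  by apply: (addrI (chi 0)); rewrite addr0 -H.
have chi_poly p f : chi (p%:F * f) = p%:F * chi f.
  elim/poly_ind: p f => [|p c IH] f; first by rewrite tofrac0 !mul0r chi0.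
  by rewrite tofracD tofracM !mulrDl chi_add -!mulrA IH chi_X chi_sc.
have chi_frac f : chi f = f * chi 1.
  have [p [q [q0 ->]]] := frac_form f.
  have q0' : q%:F != 0 :> F by rewrite tofrac_eq0.
  apply: (mulfI q0').
  have -> : q%:F * (p%:F / q%:F * chi 1) = p%:F * chi 1.
    by rewrite mulrA [q%:F * _]mulrC divfK.
  have -> : q%:F * chi (p%:F / q%:F) = chi (p%:F * 1).
    by rewrite -chi_poly [q%:F * _]mulrC divfK // mulr1.
  by rewrite chi_poly.
set k := chi 1.
have k0 : k != 0.
  apply/eqP => Hk; have : phi 1 = phi 0.
    apply: (Theta_inj EK EinvK).
    by rewrite -/Th -/(chi 1) -/(chi 0) chi0.
  by move/(can_inj phiK)/eqP; rewrite oner_eq0.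
have E1 : r * k = a%:F * fshift 1 k by rewrite -chi_p fshift1 mulr1 chi_frac.
have E2 : (pimu mu)%:F / fshift (-1) r * k = b%:F * fshift (-1) k.
  by rewrite -chi_m chi_frac /Wm fshift1 mulr1.
clearbody k.
exists a, b, k; split; [exact: k0 | exact: E1 | ].
have r0 : fshift (-1) r != 0 by rewrite (fshift_eq0 (-1) r); exact: hr.
have km0 : fshift (-1) k != 0 by rewrite (fshift_eq0 (-1) k); exact: k0.
have E3 : fshift (-1) r * fshift (-1) k = (sh (-1) a)%:F * k.
  by rewrite -fshiftM E1 fshiftM fshift_poly fshiftK.
have E4 : (pimu mu)%:F * k = b%:F * ((sh (-1) a)%:F * k).
  by rewrite -E3 mulrCA -E2 mulrA [fshift (-1) r * _]mulrC (divfK r0).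
apply/eqP; rewrite -tofrac_eq tofracM; apply/eqP; apply: (mulIf k0).
by rewrite E4 mulrA [b%:F * _]mulrC.
Qed.
End Forward.

Section Classify.
Variable K : closedFieldType.

Lemma pimu_size (mu : K) : size (pimu mu) = 3 /\ lead_coef (pimu mu) = 1.
Proof.
have Hm : pimu mu = 'X * ('X - 1%:P) + (- mu)%:P by rewrite /pimu polyC1 polyCN.
have X0 : ('X : {poly K}) != 0 by rewrite -size_poly_eq0 size_polyX.
have X1 : ('X - 1%:P : {poly K}) != 0 by rewrite -size_poly_eq0 size_XsubC.
have s1 : size ('X * ('X - 1%:P) : {poly K}) = 3.
  by rewrite size_mul // size_polyX size_XsubC.
have s2 : (size ((- mu)%:P) < 3)%N by rewrite (leq_ltn_trans (size_polyC_leq1 _)).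
rewrite Hm size_polyDl ?s1 // lead_coefDl ?s1 //.
by rewrite lead_coefM lead_coefX lead_coefXsubC mulr1.
Qed.

Lemma pimu_neq0 (mu : K) : pimu mu != 0.
Proof. by rewrite -size_poly_eq0 (pimu_size mu).1. Qed.

Lemma pimu_factor (mu : K) :
  exists al be : K, pimu mu = ('X - al%:P) * ('X - be%:P).
Proof.
have [rs Hrs] := closed_field_poly_normal (pimu mu).
have [Hs Hl] := pimu_size mu.
rewrite Hl scale1r in Hrs.
have : size (pimu mu) = (size rs).+1 by rewrite Hrs size_prod_XsubC.
rewrite Hs; case: rs Hrs => [|x [|y [|? ?]]] //= Hrs _.
by exists x, y; rewrite Hrs !big_cons big_nil mulr1.
Qed.

Lemma classify (mu al be : K) (A b : {poly K}) :
  pimu mu = ('X - al%:P) * ('X - be%:P) -> pimu mu = A * b ->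
  exists g : K, g != 0 /\
    [\/ A = g%:P * pimu mu, A = g%:P * ('X - al%:P),
        A = g%:P * ('X - be%:P) | A = g%:P].
Proof.
move=> Hf Hab.
have p0 := pimu_neq0 mu.
have A0 : A != 0 by apply: contraNneq p0 => A0; rewrite Hab A0 mul0r.
have b0 : b != 0 by apply: contraNneq p0 => b0; rewrite Hab b0 mulr0.
have Hs : size (pimu mu) = (size A + size b).-1 by rewrite Hab size_mul.
rewrite (pimu_size mu).1 in Hs.
have sA : (0 < size A)%N by rewrite size_poly_gt0.
have sb : (0 < size b)%N by rewrite size_poly_gt0.
have [sA1|sA2|sA3] : [\/ size A = 1%N, size A = 2%N | size A = 3%N].
  have : (size A <= 3)%N by lia.
  case E: (size A) sA => [|[|[|[|n]]]] // _ _;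
    [by constructor 1 | by constructor 2 | by constructor 3].
- exists (A`_0); split.
    by move: A0; rewrite {1}(size1_polyC (eq_leq sA1)) polyC_eq0.
  by constructor 4; apply: size1_polyC; rewrite sA1.
- have [rs Hrs] := closed_field_poly_normal A.
  have : size A = (size rs).+1 by rewrite {1}Hrs size_scale ?lead_coef_eq0 // size_prod_XsubC.
  rewrite sA2; case: rs Hrs => [|x [|? ?]] //= Hrs _.
  rewrite big_cons big_nil mulr1 in Hrs.
  exists (lead_coef A); split; first by rewrite lead_coef_eq0.
  have : root (pimu mu) x by rewrite Hab rootM {1}Hrs rootZ ?lead_coef_eq0 // root_XsubC eqxx.
  rewrite Hf rootM !root_XsubC => /orP [] /eqP Hx.
    by constructor 2; rewrite {1}Hrs -mul_polyC Hx.
  by constructor 3; rewrite {1}Hrs -mul_polyC Hx.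
- have sb1 : size b = 1%N by lia.
  have Hb := size1_polyC (eq_leq sb1).
  have bc0 : b`_0 != 0 by move: b0; rewrite {1}Hb polyC_eq0.
  move: Hb bc0; set d := b`_0 => Hb bc0.
  exists d^-1; split; first by rewrite invr_eq0.
  constructor 1; rewrite Hab Hb mulrCA -polyCM (mulVf bc0) polyC1 mulr1 //.
Qed.
End Classify.

Section Prods.
Variable K : fieldType.
Local Notation F := {fraction {poly K}}.

Definition prodF n (al : 'I_n -> K) (ai : 'I_n -> int) : F :=
  \prod_(i < n) (('X + ((ai i)%:~R - al i)%:P)%:F / ('X - (al i)%:P)%:F).

Definition isP (f : F) := exists n (al : 'I_n -> K) (ai : 'I_n -> int), f = prodF al ai.

Lemma isP1 : isP 1.
Proof. by exists 0%N, (fun _ => 0), (fun _ => 0); rewrite /prodF big_ord0. Qed.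

Lemma isPM f g : isP f -> isP g -> isP (f * g).
Proof.
case=> n [al [ai ->]] [m [al2 [ai2 ->]]].
exists (n + m)%N, (fun i => match split i with inl j => al j | inr j => al2 j end),
  (fun i => match split i with inl j => ai j | inr j => ai2 j end).
rewrite /prodF big_split_ord /=; congr (_ * _); apply: eq_bigr => i _.
  by have := unsplitK (inl i : 'I_n + 'I_m) => /= ->.
by have := unsplitK (inr i : 'I_n + 'I_m) => /= ->.
Qed.

Lemma isP_lin (z : K) (t : int) :
  isP (('X + (t%:~R - z)%:P)%:F / ('X - z%:P)%:F).
Proof. by exists 1%N, (fun _ => z), (fun _ => t); rewrite /prodF big_ord1. Qed.

Lemma shXC (c d : K) : sh c ('X + d%:P) = 'X + (d + c)%:P.
Proof. by rewrite shD shX shC -addrA -polyCD (addrC c d). Qed.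

Lemma sh_XsubC c (z : K) : sh c ('X - z%:P) = 'X + (c - z)%:P.
Proof. by rewrite -polyCN shXC (addrC (- z) c). Qed.

Lemma fac_up (z : K) : fshift 1 ('X - z%:P)%:F / ('X - z%:P)%:F
  = ('X + ((1:int)%:~R - z)%:P)%:F / ('X - z%:P)%:F.
Proof. by rewrite fshift_poly sh_XsubC mulr1z. Qed.

Lemma fac_down (z : K) : ('X - z%:P)%:F / fshift 1 ('X - z%:P)%:F
  = ('X + ((-1:int)%:~R - (z - 1))%:P)%:F / ('X - (z - 1)%:P)%:F.
Proof.
rewrite fshift_poly sh_XsubC mulrN1z.
have -> : (-1 - (z - 1)) = - z by rewrite opprB addrA addNr add0r.
rewrite polyCN.
by rewrite -[- (z - 1)%:P]polyCN opprB.
Qed.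
End Prods.

Section ProdsClosed.
Variable K : closedFieldType.
Local Notation F := {fraction {poly K}}.

Lemma isP_Q (rs : seq K) :
  let Q := \prod_(z <- rs) ('X - z%:P) in
  isP (fshift 1 Q%:F / Q%:F) /\ isP (Q%:F / fshift 1 Q%:F).
Proof.
elim: rs => [|z rs [IH1 IH2]] /=.
  by rewrite big_nil tofrac1 fshift1 divr1; split; apply: isP1.
rewrite big_cons tofracM fshiftM; split.
  by rewrite -mulf_div; apply: isPM => //; rewrite fac_up; apply: isP_lin.
by rewrite -mulf_div; apply: isPM => //; rewrite fac_down; apply: isP_lin.
Qed.

Lemma isP_poly (p : {poly K}) : p != 0 ->
  isP (fshift 1 p%:F / p%:F) /\ isP (p%:F / fshift 1 p%:F).
Proof.
move=> p0; have [rs Hrs] := closed_field_poly_normal p.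
have c0 : ((lead_coef p)%:P)%:F != 0 :> F by rewrite tofrac_eq0 polyC_eq0 lead_coef_eq0.
have [H1 H2] := isP_Q rs.
rewrite Hrs -mul_polyC tofracM fshiftM fshift_poly shC -!mulf_div.
by rewrite !(divff c0) !mul1r.
Qed.

Lemma isP_shift (k : F) : k != 0 -> isP (fshift 1 k / k).
Proof.
have [p [q [q0 ->]]] := frac_form k => k0.
have p0 : p != 0.
  by apply: contraNneq k0 => ->; rewrite tofrac0 mul0r.
rewrite fshift_frac //.
have -> : (sh 1 p)%:F / (sh 1 q)%:F / (p%:F / q%:F)
   = (fshift 1 p%:F / p%:F) * (q%:F / fshift 1 q%:F) :> F.
  by rewrite !fshift_poly invf_div !mulf_div (mulrC (sh 1 q)%:F).
by apply: isPM; [exact: (isP_poly p0).1 | exact: (isP_poly q0).2].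
Qed.
End ProdsClosed.

Section IsH.
Variable K : fieldType.
Local Notation F := {fraction {poly K}}.

Definition isH (f : F) := exists h : F, h != 0 /\ f = fshift 1 h / h.

Lemma isH1 : isH 1.
Proof. by exists 1; split; [exact: oner_neq0 | rewrite fshift1 divr1]. Qed.

Lemma isHM f g : isH f -> isH g -> isH (f * g).
Proof.
move=> [h [h0 Hf]] [h' [h0' Hg]]; exists (h * h'); split; first exact: (mulf_neq0 h0 h0').
by rewrite Hf Hg fshiftM mulf_div.
Qed.

Definition hpos (z : K) m := \prod_(k < m) ('X + (k%:R - z)%:P).
Definition gneg (z : K) m := \prod_(k < m) ('X + (- (k.+1)%:R - z)%:P).

Lemma XaddC_neq0 (c : K) : 'X + c%:P != 0.
Proof. exact: monic_neq0 (monicXaddC c). Qed.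

Lemma hpos_neq0 z m : hpos z m != 0.
Proof. by apply/prodf_neq0 => i _; exact: XaddC_neq0. Qed.
Lemma gneg_neq0 z m : gneg z m != 0.
Proof. by apply/prodf_neq0 => i _; exact: XaddC_neq0. Qed.

Lemma sh1_one c : sh c (1 : {poly K}) = 1.
Proof. by rewrite -polyC1 shC. Qed.

Lemma hpos_rel z m :
  sh 1 (hpos z m) * ('X - z%:P) = hpos z m * ('X + (m%:R - z)%:P).
Proof.
elim: m => [|m IH].
  by rewrite /hpos big_ord0 sh1_one !mul1r sub0r polyCN.
rewrite /hpos big_ord_recr /= -/(hpos z m) shM shXC mulrAC IH.
rewrite -!mulrA; congr (_ * (_ * _)); by rewrite mulrSr addrAC.
Qed.

Lemma gneg_rel z m :
  gneg z m * ('X - z%:P) = ('X + (- m%:R - z)%:P) * sh 1 (gneg z m).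
Proof.
elim: m => [|m IH].
  by rewrite /gneg big_ord0 sh1_one mul1r mulr1 oppr0 sub0r polyCN.
rewrite /gneg big_ord_recr /= -/(gneg z m) shM shXC mulrAC IH.
have -> : - (m.+1)%:R - z + 1 = - m%:R - z :> K.
  by rewrite mulrSr; ring.
ring.
Qed.

Lemma isH_lin (z : K) (t : int) :
  isH (('X + (t%:~R - z)%:P)%:F / ('X - z%:P)%:F).
Proof.
have d0 : ('X - z%:P : {poly K}) != 0 by rewrite -polyCN XaddC_neq0.
case: t => m.
  exists (hpos z m)%:F; split; first by rewrite tofrac_eq0 hpos_neq0.
  rewrite fshift_poly; apply/(frac_eq _ _ d0 (hpos_neq0 z m)).
  by rewrite hpos_rel mulrC -pmulrn.
exists ((gneg z m.+1)%:F)^-1; split; first by rewrite invr_eq0 tofrac_eq0 gneg_neq0.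
rewrite fshiftV fshift_poly invrK [RHS]mulrC.
apply/(frac_eq _ _ d0 (sh_neq0 1 (gneg_neq0 z m.+1))).
by rewrite gneg_rel NegzE intrN -pmulrn.
Qed.

Lemma isH_prodF n (al : 'I_n -> K) (ai : 'I_n -> int) : isH (prodF al ai).
Proof.
rewrite /prodF; apply: big_ind; [exact: isH1 | exact: isHM | move=> i _; exact: isH_lin].
Qed.
End IsH.

Definition Tmap (K : fieldType) (m : {poly K}) (c : K) (p : {poly K}) := m * sh c p.

Lemma Tmap_lin (K : fieldType) (m : {poly K}) (c : K) : linear (Tmap m c).
Proof. by move=> k u v; rewrite /Tmap /sh comp_polyD comp_polyZ mulrDr scalerAr. Qed.

HB.instance Definition _ (K : fieldType) (m : {poly K}) (c : K) :=
  GRing.isLinear.Build K {poly K} {poly K} _ (Tmap m c) (Tmap_lin m c).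

Lemma TmapE (K : fieldType) (m : {poly K}) (c : K) (v : {poly K}) :
  (Tmap m c : {linear {poly K} -> {poly K}}) v = m * sh c v.
Proof. by []. Qed.

Lemma fid1 (L : fieldType) (h A b hm fm : L) : h != 0 -> A != 0 -> hm != 0 ->
  h * (A * b / (A * (h / hm)) * fm) = b * (hm * fm).
Proof. move=> h0 A0 hm0; field. by rewrite h0 A0 hm0. Qed.
Lemma fid2 (L : fieldType) (h a h1 f1 : L) : h != 0 ->
  h * (a * (h1 / h) * f1) = a * (h1 * f1).
Proof. move=> h0; field. exact: h0. Qed.

Section Backward.
Variables (K : closedFieldType) (mu : K) (A b0 : {poly K}) (hAb : A * b0 = pimu mu)
  (h : {fraction {poly K}}) (h0 : h != 0) (r : {fraction {poly K}})
  (hr : r = (sh 1 A)%:F * (fshift 1 h / h)).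
Local Notation F := {fraction {poly K}}.
Local Notation a0 := (sh 1 A).
Local Notation Lm := (Tmap b0 (-1) : {linear {poly K} -> {poly K}}).
Local Notation L0 := (Tmap 'X 0 : {linear {poly K} -> {poly K}}).
Local Notation Lp := (Tmap a0 1 : {linear {poly K} -> {poly K}}).

Lemma sh0 (p : {poly K}) : sh 0 p = p.
Proof. by rewrite /sh polyC0 addr0 comp_polyXr. Qed.
Lemma shK' (c : K) (p : {poly K}) : sh c (sh (- c) p) = p.
Proof. by have := shK (- c) p; rewrite opprK. Qed.

Lemma shpimu : sh 1 (pimu mu) = pimu mu + 'X *+ 2.
Proof.
rewrite /pimu /sh -polyC1 comp_polyB comp_polyM comp_polyX comp_polyB comp_polyX !comp_polyC polyC1.
ring.
Qed.

Lemma e1 : a0 * sh 1 b0 = pimu mu + 'X *+ 2.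
Proof. by rewrite -shM hAb shpimu. Qed.
Lemma e2 : b0 * A = pimu mu.
Proof. by rewrite mulrC hAb. Qed.

Lemma zact_mul (p v : {poly K}) : zact L0 p v = p * v.
Proof.
elim/poly_ind: p v => [|p c IH] v; first by rewrite zact0 mul0r.
rewrite zactD zactC zact_mulX' IH TmapE sh0 mulrDl mulrA mul_polyC //.
Qed.

Lemma HTp (v : {poly K}) : Lp (L0 v) = L0 (Lp v) + 1 *: Lp v.
Proof.
rewrite !TmapE !sh0 shM shX scale1r polyC1.
have H (u w : {poly K}) : u * (('X + 1) * w) = 'X * (u * w) + u * w by ring.
exact: H.
Qed.
Lemma HTm (v : {poly K}) : Lm (L0 v) = L0 (Lm v) + (-1) *: Lm v.
Proof.
rewrite !TmapE !sh0 shM shX scaleN1r polyCN polyC1.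
have H (u w : {poly K}) : u * (('X + - 1) * w) = 'X * (u * w) + - (u * w) by ring.
exact: H.
Qed.

Lemma sl2_1 (v : {poly K}) : a0 * (sh 1 b0 * v) - b0 * (A * v) = ('X * v) *+ 2.
Proof. rewrite !mulrA e1 e2; ring. Qed.

Lemma cas1 (v : {poly K}) :
  'X * ('X * v - v) - b0 * (A * v) = mu%:P * v.
Proof. rewrite mulrA e2 /pimu; ring. Qed.

Lemma back_rep : poly_casimir_rank1 Lm L0 Lp.
Proof.
split.
- split => v.
  + rewrite !TmapE !shM shK' !shK sh0; exact: sl2_1.
  + by rewrite HTp scale1r opprD addrA subrr sub0r.
  + by rewrite HTm scaleN1r opprD addrA subrr sub0r opprK.
- exists mu => v; rewrite /casimir_op !TmapE !sh0 shM !shK -mul_polyC.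
  exact: cas1.
- exists 1; exists id => p; rewrite /= ?zact_mul ?mulr1 //.
Qed.

Lemma EK : cancel ((zact L0)^~ 1) id.
Proof. by move=> p; rewrite /= zact_mul mulr1. Qed.
Lemma EinvK : cancel id ((zact L0)^~ 1).
Proof. by move=> p; rewrite /= zact_mul mulr1. Qed.

Lemma Lp1 : Lp 1 = (zact L0)^~ 1 a0.
Proof. by rewrite /= zact_mul mulr1 !TmapE sh1_one mulr1. Qed.
Lemma Lm1 : Lm 1 = (zact L0)^~ 1 b0.
Proof. by rewrite /= zact_mul mulr1 !TmapE sh1_one mulr1. Qed.

Lemma A_neq0 : A != 0.
Proof. by apply: contraNneq (pimu_neq0 mu) => A0; rewrite -hAb A0 mul0r. Qed.

Lemma back_iso : iso_to_rat Lm L0 Lp mu r.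
Proof.
have TiK : cancel (Thinv L0 1) (@Theta _ _ L0 id) by move=> f; apply: (ThinvK EK EinvK).
have Tinj : injective (@Theta _ _ L0 id) by apply: (Theta_inj EK EinvK).
exists (fun f => Thinv L0 1 (h * f)); split.
  exists (fun x => Theta id x / h) => [f|x] /=; first by rewrite TiK [h * f]mulrC (mulfK h0).
  by apply: Tinj; rewrite TiK mulrC (divfK h0).
split.
- move=> f g; apply: Tinj; rewrite (Theta_add EK EinvK) !TiK; exact: mulrDr.
- move=> c f; apply: Tinj; rewrite (Theta_scale EK EinvK) !TiK /Wscale; exact: mulrCA.
- move=> f; apply: Tinj; rewrite /locm.
  have -> : ('X - 1 : {poly K}) = 'X + (-1)%:P by rewrite polyCN polyC1.
  rewrite (Theta_shift EK EinvK HTm Lm1) !TiK /Wm.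
  have hm0 : fshift (-1) h != 0 by rewrite (fshift_eq0 (-1) h); exact: h0.
  have -> : fshift (-1) r = A%:F * (h / fshift (-1) h).
    rewrite hr (fshiftM (-1) (a0%:F)) (fshiftM (-1) (fshift 1 h)) fshift_poly shK.
    by rewrite fshiftV fshiftK.
  rewrite fshiftM -hAb tofracM.
  apply: fid1; [exact: h0 | by rewrite tofrac_eq0 A_neq0 | exact: hm0].
- move=> f; apply: Tinj; rewrite (Theta_0 EK EinvK) !TiK /W0; exact: mulrCA.
- move=> f; apply: Tinj; rewrite /locp -polyC1.
  rewrite (Theta_shift EK EinvK HTp Lp1) !TiK /Wp hr fshiftM.
  exact: fid2.
Qed.
End Backward.

Lemma gg (K : fieldType) (g : K) : g != 0 -> g%:P * g^-1%:P = 1 :> {poly K}.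
Proof. by move=> g0; rewrite -polyCM mulfV // polyC1. Qed.

Unset Implicit Arguments.
Local Close Scope quotient_scope.

Theorem theorem9p3 (R : realType) (mu : R[i]) (r : {fraction {poly R[i]}})
    (hr : r != 0) :
  (exists (V : lmodType R[i]) (Lm L0 Lp : {linear V -> V}),
      poly_casimir_rank1 Lm L0 Lp /\ iso_to_rat Lm L0 Lp mu r)
  <->
  (exists alpha_mu beta_mu : R[i],
      pimu mu = ('X - alpha_mu%:P) * ('X - beta_mu%:P) /\
      exists (gamma : R[i]) (n : nat) (al : 'I_n -> R[i]) (a : 'I_n -> int),
        gamma != 0 /\
        let P := \prod_(i < n)
                  (('X + ((a i)%:~R - al i)%:P)%:F / ('X - (al i)%:P)%:F) in
        [\/ r = (gamma%:P)%:F * (pimu mu \Po ('X + 1))%:F * P,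
            r = (gamma%:P)%:F * (('X - alpha_mu%:P) \Po ('X + 1))%:F * P,
            r = (gamma%:P)%:F * (('X - beta_mu%:P) \Po ('X + 1))%:F * P
          | r = (gamma%:P)%:F * P]).
Proof.
split.
- move=> [V [Lm [L0 [Lp [Hrep Hiso]]]]].
  have [a [b [k [k0 E1 E2]]]] := forward_core hr Hrep Hiso.
  have [al [be Hf]] := pimu_factor mu.
  have [g [g0 Hc]] := classify Hf E2.
  have [n [al' [ai HP]]] := isP_shift k0.
  have ra : r = a%:F * prodF al' ai.
    apply: (mulIf k0); rewrite E1 -HP -mulrA (divfK k0).
    reflexivity.
  exists al, be; split; first exact: Hf.
  exists g, n, al', ai; split; first exact: g0.
  change ([\/ r = (g%:P)%:F * (pimu mu \Po ('X + 1))%:F * prodF al' ai,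
            r = (g%:P)%:F * (('X - al%:P) \Po ('X + 1))%:F * prodF al' ai,
            r = (g%:P)%:F * (('X - be%:P) \Po ('X + 1))%:F * prodF al' ai
          | r = (g%:P)%:F * prodF al' ai]).
  rewrite ra -(shK' 1 a).
  case: Hc => HA; rewrite HA.
  + by constructor 1; rewrite shM shC tofracM /sh polyC1.
  + by constructor 2; rewrite shM shC tofracM /sh polyC1.
  + by constructor 3; rewrite shM shC tofracM /sh polyC1.
  + by constructor 4; rewrite shC.
- move=> [al [be [Hf [g [n [al' [ai [g0 HP]]]]]]]].
  have HP' : [\/ r = (g%:P)%:F * (pimu mu \Po ('X + 1))%:F * prodF al' ai,
            r = (g%:P)%:F * (('X - al%:P) \Po ('X + 1))%:F * prodF al' ai,
            r = (g%:P)%:F * (('X - be%:P) \Po ('X + 1))%:F * prodF al' ai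
          | r = (g%:P)%:F * prodF al' ai] := HP.
  have [h [h0 Hh]] := isH_prodF al' ai.
  have [A [b0 [hAb HrA]]] : exists A b0 : {poly R[i]},
      A * b0 = pimu mu /\ r = (sh 1 A)%:F * prodF al' ai.
    case: HP' => Hr.
    + exists (g%:P * pimu mu), (g^-1%:P); split.
        by rewrite mulrAC gg // mul1r.
      by rewrite Hr shM shC tofracM /sh polyC1.
    + exists (g%:P * ('X - al%:P)), (g^-1%:P * ('X - be%:P)); split.
        by rewrite mulrACA gg // mul1r Hf.
      by rewrite Hr shM shC tofracM /sh polyC1.
    + exists (g%:P * ('X - be%:P)), (g^-1%:P * ('X - al%:P)); split.
        by rewrite mulrACA gg // mul1r mulrC Hf.
      by rewrite Hr shM shC tofracM /sh polyC1.
    + exists (g%:P), (g^-1%:P * pimu mu); split.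
        by rewrite mulrA gg // mul1r.
      by rewrite Hr shC.
  rewrite Hh in HrA.
  eexists.
  exists (Tmap b0 (-1) : {linear {poly R[i]} -> {poly R[i]}}),
    (Tmap 'X 0 : {linear {poly R[i]} -> {poly R[i]}}),
    (Tmap (sh 1 A) 1 : {linear {poly R[i]} -> {poly R[i]}}).
  split; first exact: back_rep hAb.
  exact (back_iso hAb h0 HrA).
Qed.
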